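(* Let $G=(V,E)$ be a finite simple graph on $n$ vertices with no isolated vertex. Let $\mathcal{A}$ be the set of all graphs $G'$ with vertex set $V$ that can be obtained as follows: for each vertex $v\in V$, if $\deg_G(v)\ge 2$, choose two distinct neighbors $u,w$ of $v$ in $G$ and put the edge $uw$ into $G'$; if $\deg_G(v)=1$, put a loop on the unique neighbor of $v$ into $G'$ (an edge already present is not duplicated). Let $G'_{\min}\in\mathcal{A}$ minimize $n-\alpha(G')$ over $G'\in\mathcal{A}$. Then $$\gamma_t(G)=n-\alpha(G'_{\min})=\beta(G'_{\min}).$$
   Context: A set $S\subseteq V$ is a total dominating set of $G$ if every vertex $v\in V$ has a neighbor in $S$; $\gamma_t(G)$ is the minimum size of a total dominating set of $G$. For a graph $H$ possibly with loops, an independent set is a set of vertices containing no two endpoints of an edge and no vertex carrying a loop, and $\alpha(H)$ is the maximum size of an independent set; a vertex cover is a set of vertices meeting every edge (so it contains every vertex carrying a loop), and $\beta(H)$ is the minimum size of a vertex cover. *)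

(* Defs.v *)
From mathcomp Require Import all_boot.
Set Implicit Arguments. Unset Strict Implicit. Unset Printing Implicit Defensive.

Definition simple_graph (T : finType) (e : rel T) : Prop :=
  symmetric e /\ irreflexive e.

Definition no_isolated (T : finType) (e : rel T) : Prop :=
  forall v : T, exists u, e v u.

Definition deg (T : finType) (e : rel T) (v : T) : nat := #|[set u | e v u]|.

Definition total_dom (T : finType) (e : rel T) (S : {set T}) : bool :=
  [forall v, [exists u in S, e v u]].

(* gamma_t: minimum size of a total dominating set (#|T| is only a neutral
   default for minn; a total dominating set exists when there are no isolated
   vertices). *)
Definition gamma_t (T : finType) (e : rel T) : nat :=
  \big[minn/#|T|]_(S : {set T} | total_dom e S) #|S|.

(* Graphs possibly with loops on T: relations h; h x x means a loop at x. *)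
Definition indep (T : finType) (h : rel T) (S : {set T}) : bool :=
  [forall x in S, forall y in S, ~~ h x y].

Definition alpha (T : finType) (h : rel T) : nat :=
  \max_(S : {set T} | indep h S) #|S|.

Definition vcover (T : finType) (h : rel T) (S : {set T}) : bool :=
  [forall x, forall y, h x y ==> (x \in S) || (y \in S)].

Definition beta (T : finType) (h : rel T) : nat :=
  \big[minn/#|T|]_(S : {set T} | vcover h S) #|S|.

Definition admissible_choice (T : finType) (e : rel T) (c : T -> T * T) : Prop :=
  forall v : T,
    (2 <= deg e v -> (c v).1 != (c v).2 /\ e v (c v).1 /\ e v (c v).2) /\
    (deg e v = 1 -> (c v).1 = (c v).2 /\ e v (c v).1).

Definition graph_of_choice (T : finType) (c : T -> T * T) : rel T :=
  fun x y => [exists v, (c v == (x, y)) || (c v == (y, x))].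

Definition in_family_A (T : finType) (e : rel T) (h : rel T) : Prop :=
  exists c : T -> T * T, admissible_choice e c /\ h =2 graph_of_choice c.

(* Main.v *)
Require Import Defs.
From mathcomp Require Import all_boot.
From mathcomp Require Import zify.

Lemma bigmin_le (I : eqType) (r : seq I) (P : pred I) (F : I -> nat) d x :
  x \in r -> P x -> \big[minn/d]_(i <- r | P i) F i <= F x.
Proof.
elim: r => // y r IH; rewrite inE big_cons => /orP [/eqP <- -> | xr Px].
  by rewrite geq_minl.
case: (P y); last exact: IH.
by rewrite geq_min IH ?orbT.
Qed.

Lemma gamma_t_lb (T : finType) (e : rel T) k :
  k <= #|T| -> (forall S, total_dom e S -> k <= #|S|) -> k <= gamma_t e.
Proof.
move=> hT hS; rewrite /gamma_t.
elim/big_ind: _ => //; first by move=> x y; rewrite leq_min => -> ->.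
Qed.

Lemma gamma_t_ub (T : finType) (e : rel T) S : total_dom e S -> gamma_t e <= #|S|.
Proof. by move=> hS; rewrite /gamma_t; apply: bigmin_le => //; exact: mem_index_enum. Qed.

Lemma beta_lb (T : finType) (h : rel T) k :
  k <= #|T| -> (forall S, vcover h S -> k <= #|S|) -> k <= beta h.
Proof.
move=> hT hS; rewrite /beta.
elim/big_ind: _ => //; first by move=> x y; rewrite leq_min => -> ->.
Qed.

Lemma beta_ub (T : finType) (h : rel T) S : vcover h S -> beta h <= #|S|.
Proof. by move=> hS; rewrite /beta; apply: bigmin_le => //; exact: mem_index_enum. Qed.

Lemma alpha_ub (T : finType) (h : rel T) S : indep h S -> #|S| <= alpha h.
Proof. by move=> hS; rewrite /alpha (bigD1 S) //= leq_maxl. Qed.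

Lemma alpha_ex (T : finType) (h : rel T) : exists S, indep h S /\ #|S| = alpha h.
Proof.
have i0 : indep h set0 by apply/forall_inP => x; rewrite in_set0.
case: (@arg_maxnP _ set0 (indep h) (fun S => #|S|) i0) => S iS mS.
exists S; split => //; apply/eqP; rewrite eqn_leq alpha_ub //=.
by rewrite /alpha; apply/bigmax_leqP => S' /mS.
Qed.

Lemma gamma_ex (T : finType) (e : rel T) : no_isolated e ->
  exists S, total_dom e S /\ #|S| = gamma_t e.
Proof.
move=> ni.
have t0 : total_dom e setT.
  by apply/forallP => v; case: (ni v) => u hu; apply/existsP; exists u; rewrite in_setT.
case: (@arg_minnP _ setT (total_dom e) (fun S => #|S|) t0) => S tS mS.
exists S; split => //; apply/eqP; rewrite eqn_leq gamma_t_ub // /=.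

rewrite andbT; apply: gamma_t_lb; [exact: max_card | exact: mS].
Qed.

Lemma indep_vcover (T : finType) (h : rel T) S : vcover h S = indep h (~: S).
Proof.
apply/idP/idP.
- move/forallP=> H; apply/forall_inP => x; rewrite in_setC => xS.
  apply/forall_inP => y; rewrite in_setC => yS; apply/negP => hxy.
  by move: (forallP (H x) y); rewrite hxy (negbTE xS) (negbTE yS).
- move/forall_inP=> H; apply/forallP => x; apply/forallP => y; apply/implyP => hxy.
  case xS: (x \in S) => //; case yS: (y \in S) => //.
  have := forall_inP (H x _) y; rewrite !in_setC xS yS hxy => /(_ isT isT) //.
Qed.

Lemma beta_alpha (T : finType) (h : rel T) : #|T| - alpha h = beta h.
Proof.
apply/eqP; rewrite eqn_leq; apply/andP; split.
- apply: beta_lb; first exact: leq_subr.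
  move=> S; rewrite indep_vcover => /alpha_ub; rewrite cardsCs setCK.
  move=> H; have := max_card (mem S); lia.
- case: (@alpha_ex _ h) => I [iI <-].
  have : vcover h (~: I) by rewrite indep_vcover setCK.
  by move/beta_ub; rewrite cardsCs setCK.
Qed.

Lemma deg_cases (T : finType) (e : rel T) v : (exists u, e v u) ->
  deg e v = 1 \/ 2 <= deg e v.
Proof.
case=> u hu; have : 0 < deg e v by apply/card_gt0P; exists u; rewrite inE.
by case: (deg e v) => [|[|n]] //; auto.
Qed.

Theorem theorem2p2 (T : finType) (e : rel T) (h : rel T) :
  simple_graph e -> no_isolated e ->
  in_family_A e h ->
  (forall h' : rel T, in_family_A e h' -> #|T| - alpha h <= #|T| - alpha h') ->
  gamma_t e = #|T| - alpha h /\ #|T| - alpha h = beta h.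
Proof.
move=> sg ni [c [adm hc]] hmin; split; last exact: beta_alpha.
apply/eqP; rewrite eqn_leq; apply/andP; split.
-
  case: (@alpha_ex _ h) => I [iI <-].
  apply: (@leq_trans #|~: I|); last by have := cardsC I; lia.
  apply: gamma_t_ub; apply/forallP => v.
  have [e1 e2 hh] : [/\ e v (c v).1, e v (c v).2 & h (c v).1 (c v).2].
    have hh : h (c v).1 (c v).2.
      by rewrite hc; apply/existsP; exists v; rewrite -surjective_pairing eqxx.
    case: (@deg_cases _ _ _ (ni v)) => d; case: (adm v) => A B.
    - by case: (B d) => E1 E2; split => //; rewrite -E1.
    - by case: (A d) => _ [E1 E2]; split.
  case I1: ((c v).1 \in I).
  + case I2: ((c v).2 \in I).
    * by have := forall_inP (forall_inP iI _ I1) _ I2; rewrite hh.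
    * by apply/existsP; exists (c v).2; rewrite in_setC I2 e2.
  + by apply/existsP; exists (c v).1; rewrite in_setC I1 e1.
-
  case: (@gamma_ex _ _ ni) => S [tS <-].
  pose u v := odflt v [pick u in S | e v u].
  pose w v := odflt (u v) [pick w | e v w && (w != u v)].
  pose c' v := (u v, w v).
  have uS v : u v \in S /\ e v (u v).
    rewrite /u; case: pickP => [x /andP [] //|/= H].
    by case/existsP: (forallP tS v) => x /andP [xS ex]; have := H x; rewrite xS ex.
  have adm' : admissible_choice e c'.
    move=> v; have [uS1 uS2] := uS v; split => d /=.
    + rewrite /w; case: pickP => [x /andP [ex nx] /=|H /=].
        by rewrite eq_sym nx.
      exfalso; move: d; rewrite /deg; apply/negP; rewrite -ltnNge ltnS.
      apply: (@leq_trans #|[set u v]|); last by rewrite cards1.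
      apply: subset_leq_card; apply/subsetP => x; rewrite !inE => ex.
      by apply/negPn; apply/negP => nx; have := H x; rewrite ex nx.
    + split => //; rewrite /w; case: pickP => [x /andP [ex nx] /=|//].
      exfalso; move/eqP: d; rewrite /deg => /cards1P [y Hy].
      have : x \in [set y] by rewrite -Hy inE.
      have : u v \in [set y] by rewrite -Hy inE.
      by move=> /set1P E1 /set1P E2; move: nx; rewrite E2 -E1 eqxx.
  have fam : in_family_A e (graph_of_choice c') by exists c'.
  have := hmin _ fam.
  have ind : indep (graph_of_choice c') (~: S).
    apply/forall_inP => x; rewrite in_setC => xS; apply/forall_inP => y; rewrite in_setC => yS.
    apply/negP => /existsP [v /orP []] /eqP E; have [uS1 _] := uS v;
      move: E; rewrite /c' => -[E1 E2]; by rewrite E1 ?E2 in uS1; rewrite uS1 in xS yS.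
  have := @alpha_ub _ _ _ ind; have := cardsC S => H0 H1 H2.
  have := max_card (mem S); lia.
Qed.
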